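(* Let $n\ge1$ and let $\hat\pi$ be a linked cycle on $[n]$. Then in the marked linear representation of $\hat\pi$, the number of arcs plus the number of marks equals $n-1$.
   Context: Two finite sets of integers $E,F$ are nearly disjoint if for every $i\in E\cap F$ either ($i=\min(E)$, $|E|>1$, $i\ne\min(F)$) or ($i=\min(F)$, $|F|>1$, $i\ne\min(E)$). A linked partition of $[n]$ is a set of nonempty subsets (blocks) of $[n]$ with union $[n]$, any two distinct blocks nearly disjoint; each element lies in one or two blocks (singly/doubly covered). A linked cycle on $[n]$ is a linked partition of $[n]$ in which the elements of each block are arranged in a cycle; a cycle is written $(i_1i_2\dots i_t)$ with $i_1$ its minimum. The linear representation of $\hat\pi$: for each $i\in[n]$ create vertices as follows: if $i$ is singly covered and is the minimum of its cycle, which has $k+1$ elements, create $i^{(1)},\dots,i^{(k)}$ if $k\ge1$, and a single isolated vertex $i^{(1)}$ if $k=0$; if $i$ is singly covered and not the minimum of its cycle, create $i^{(0)}$; if $i$ is doubly covered and is the minimum of a cycle of size $k+1$, create $i^{(0)},i^{(1)},\dots,i^{(k)}$. Vertices are placed on a line ordered by $i$ and then by superscript. For each cycle $(i_1i_2\dots i_t)$ with $t\ge2$ draw the arcs $(i_1^{(j)},i_{t+1-j}^{(0)})$ for $j=1,\dots,t-1$. The marked linear representation additionally places a mark immediately before $i^{(1)}$ for each singly covered $i\neq1$ that is the minimum of its cycle. *)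

(* Defs.v *)
From mathcomp Require Import all_boot.
Set Implicit Arguments. Unset Strict Implicit. Unset Printing Implicit Defensive.

(* A finite set of integers is represented by a duplicate-free seq nat.      *)
Definition smin (s : seq nat) : nat := foldr minn (head 0 s) s.

Definition nearly_disjoint (E F : seq nat) : Prop :=
  forall i, i \in E -> i \in F ->
    (i = smin E /\ 1 < size E /\ i <> smin F) \/
    (i = smin F /\ 1 < size F /\ i <> smin E).

(* A cycle (i_1 i_2 ... i_t) is written as the seq [:: i_1; ...; i_t] with   *)
(* i_1 its minimum.  A linked cycle on [n] is a list of such cycles whose     *)
(* underlying blocks form a linked partition of [n] = {1,...,n}.              *)
Definition is_cycle_on (n : nat) (c : seq nat) : Prop :=
  [/\ c != [::], uniq c, all (fun x => 1 <= x <= n) c & head 0 c = smin c].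

Definition linked_cycle (n : nat) (L : seq (seq nat)) : Prop :=
  [/\ forall c, c \in L -> is_cycle_on n c,
      forall i, 1 <= i <= n -> exists2 c, c \in L & i \in c
    & forall p q, p < size L -> q < size L -> p <> q ->
        nearly_disjoint (nth [::] L p) (nth [::] L q)].

Definition cover_count (L : seq (seq nat)) (i : nat) : nat :=
  count (fun c => i \in c) L.

Definition singly_covered L i := cover_count L i = 1.

(* Vertices of the linear representation are pairs (i, superscript). *)
Definition vertex := (nat * nat)%type.

(* Arcs of the linear representation contributed by a cycle (i_1 ... i_t):  *)
(* (i_1^(j), i_(t+1-j)^(0)) for j = 1 .. t-1 (empty if t = 1).              *)
Definition cycle_arcs (c : seq nat) : seq (vertex * vertex) :=
  [seq ((head 0 c, j), (nth 0 c (size c - j), 0)) | j <- iota 1 (size c).-1].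

Definition arcs (L : seq (seq nat)) : seq (vertex * vertex) :=
  flatten [seq cycle_arcs c | c <- L].

(* A mark is placed before i^(1) for each singly covered i <> 1 that is the  *)
(* minimum of its cycle; number of marks: *)
Definition marks (n : nat) (L : seq (seq nat)) : nat :=
  count (fun i => [&& i != 1, cover_count L i == 1 & has (fun c => head 0 c == i) L])
        (iota 1 n).

(* Main.v *)
Require Import Defs.
From mathcomp Require Import all_boot.
From mathcomp Require Import zify.

Lemma countE (T : Type) (a : pred T) (s : seq T) :
  count a s = \sum_(x <- s) (a x : nat).
Proof. elim: s => [|x s IH]; by rewrite ?big_nil ?big_cons //= IH. Qed.

Lemma smin_le (s : seq nat) x : x \in s -> smin s <= x.
Proof.
rewrite /smin; move: (head 0 s) => d.
elim: s => [|y s IH] //=; rewrite in_cons => /orP [/eqP ->|/IH H].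
  by rewrite geq_minl.
exact: leq_trans (geq_minr _ _) H.
Qed.

Lemma two_idx {T : Type} (x0 : T) {P : pred T} {L : seq T} :
  1 < count P L -> exists p q, [/\ p < size L, q < size L, p <> q,
     P (nth x0 L p) & P (nth x0 L q)].
Proof.
elim: L => [|a L IH] //=.
case Pa: (P a) => /= H.
  have : has P L by rewrite has_count; lia.
  move=> hP; exists 0, (find P L).+1; split => //=.
  - by rewrite ltnS -has_find.
  - exact: nth_find.
have [p [q [hp hq pq Pp Pq]]] := IH H.
exists p.+1, q.+1; split => //=; by move=> [].
Qed.

Lemma head_mem (c : seq nat) : c != [::] -> head 0 c \in c.
Proof. by case: c => //= x s _; rewrite mem_head. Qed.

Lemma per_i n L i : linked_cycle n L -> 1 <= i <= n ->
  count (fun c => i \in c) L +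
  [&& i != 1, cover_count L i == 1 & has (fun c => head 0 c == i) L] =
  (i != 1) + count (fun c => head 0 c == i) L.
Proof.
move=> [Hc Hcov Hnd] Hi.
have hcnt : count (fun c => i \in c) L = count (fun c => head 0 c == i) L
   + count (fun c => (i \in c) && (head 0 c != i)) L.
  rewrite !countE -big_split; apply: eq_big_seq => c cL /=.
  have [cn _ _ _] := Hc c cL.
  case: eqP => [<-|_] /=; first by rewrite head_mem // andbF.
  by rewrite andbT.
have hh : count (fun c => head 0 c == i) L <= 1.
  rewrite leqNgt; apply/negP => /(two_idx [::]) [p [q [hp hq pq Pp Pq]]].
  have := Hnd p q hp hq pq i.
  have [cn1 _ _ e1] := Hc _ (mem_nth [::] hp).
  have [cn2 _ _ e2] := Hc _ (mem_nth [::] hq).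
  move/eqP: Pp => Pp; move/eqP: Pq => Pq.
  have I1 : i \in nth [::] L p by rewrite -Pp head_mem.
  have I2 : i \in nth [::] L q by rewrite -Pq head_mem.
  move=> /(_ I1 I2).
  rewrite -e1 -e2 Pp Pq; by case=> [[_ [_ []]]|[_ [_ []]]].
have hnh : count (fun c => (i \in c) && (head 0 c != i)) L <= 1.
  rewrite leqNgt; apply/negP => /(two_idx [::]) [p [q [hp hq pq Pp Pq]]].
  have := Hnd p q hp hq pq i.
  have [cn1 _ _ e1] := Hc _ (mem_nth [::] hp).
  have [cn2 _ _ e2] := Hc _ (mem_nth [::] hq).
  move/andP: Pp => [Ip /eqP Pp]; move/andP: Pq => [Iq /eqP Pq].
  move=> /(_ Ip Iq); rewrite -e1 -e2; case=> [[a _]|[a _]]; [exact: Pp (esym a) | exact: Pq (esym a)].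
have hcov : 0 < count (fun c => i \in c) L.
  have [c cL ic] := Hcov i Hi; rewrite -has_count; apply/hasP; by exists c.
have h1 : i = 1 -> count (fun c => (i \in c) && (head 0 c != i)) L = 0.
  move=> ei; rewrite (@eq_in_count _ _ pred0); first by rewrite count_pred0.
  move=> c cL /=; have [cn _ al e] := Hc c cL.
  apply/negP => /andP [ic /eqP hn]; apply: hn.
  have := @smin_le _ _ ic; rewrite -e => le1.
  have := allP al _ (@head_mem _ cn) => /andP [ge1 _]; lia.
rewrite has_count /cover_count hcnt in hcov *.
case: (eqVneq i 1) => [ei|ni] /=.
  rewrite h1 //; lia.
move: hh hnh hcov.
case: (count (fun c => head 0 c == i) L) => [|[|a]] //;
case: (count (fun c => (i \in c) && (head 0 c != i)) L) => [|[|b]] //.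
Qed.

Lemma size_count {n : nat} {c : seq nat} : uniq c -> all (fun x => 1 <= x <= n) c ->
  size c = count (fun i => i \in c) (iota 1 n).
Proof.
move=> u al; rewrite -size_filter; apply/perm_size.
apply: uniq_perm => //; first by rewrite filter_uniq // iota_uniq.
move=> x; rewrite mem_filter mem_iota /=.
case xc: (x \in c) => //=.
have := allP al x xc; lia.
Qed.

Theorem proposition4p4 (n : nat) (L : seq (seq nat)) :
  1 <= n -> linked_cycle n L -> size (arcs L) + marks n L = n - 1.
Proof.
move=> n1 HL; have [Hc Hcov Hnd] := HL.
set I := iota 1 n.
have A : size (arcs L) + size L = \sum_(i <- I) count (fun c => i \in c) L.
  under eq_bigr do rewrite countE.
  rewrite exchange_big /= /arcs size_flatten /shape -map_comp sumnE big_map.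
  rewrite -(count_predT L) countE -big_split /=; apply: eq_big_seq => c cL.
  have [cn u al _] := Hc c cL.
  rewrite /= size_map size_iota -countE -(size_count (n:=n) u al) addn1 prednK //.
  by case: c cn {cL u al}.
have B : size L = \sum_(i <- I) count (fun c => head 0 c == i) L.
  under eq_bigr do rewrite countE.
  rewrite exchange_big /= -(count_predT L) countE; apply: eq_big_seq => c cL.
  have [cn u al _] := Hc c cL.
  rewrite -countE.
  have -> : count (fun i => head 0 c == i) I = count_mem (head 0 c) I.
    by apply: eq_count => x; rewrite /= eq_sym.
  rewrite count_uniq_mem ?iota_uniq // mem_iota.
  have := allP al _ (@head_mem _ cn); case/andP => a b.
  have -> : (0 < head 0 c < 1 + n) = true by lia.
  by [].
have C : n - 1 = \sum_(i <- I) (i != 1 : nat).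
  rewrite -countE.
  have := count_predC (pred1 1) I; rewrite count_uniq_mem ?iota_uniq // mem_iota size_iota.
  have -> : (1 <= 1 < 1 + n) = true by lia.
  move=> <-; rewrite add1n subSS subn0; by apply: eq_count => x.
have D : \sum_(i <- I) (count (fun c => i \in c) L +
  [&& i != 1, cover_count L i == 1 & has (fun c => head 0 c == i) L]) =
  \sum_(i <- I) ((i != 1 : nat) + count (fun c => head 0 c == i) L).
  apply: eq_big_seq => i; rewrite mem_iota => Hi; apply: (@per_i n L i HL); lia.
rewrite !big_split /= -A -B -C -countE in D.
by move: D; rewrite /marks -/I addnAC => /addIn.
Qed.
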